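(* Let $\mathcal{C}\subseteq 2^{[n]}$ and $\mathcal{D}\subseteq 2^{[m]}$ be reduced codes and let $f:\mathcal{C}\to\mathcal{D}$ be an isomorphism. Then $n=m$ and $f$ is a permutation isomorphism: there is a permutation $w$ of $[n]$ with $f(c)=w(c)$ for all $c\in\mathcal{C}$.
   Context: A code is a subset $\mathcal{C}\subseteq 2^{[n]}$. For $\sigma\subseteq[n]$, $\mathrm{Tk}_{\mathcal{C}}(\sigma)=\{c\in\mathcal{C}\mid\sigma\subseteq c\}$, $\mathrm{Tk}_{\mathcal{C}}(i)=\mathrm{Tk}_{\mathcal{C}}(\{i\})$; a trunk in $\mathcal{C}$ is a subset that is empty or of this form. A morphism $f:\mathcal{C}\to\mathcal{D}$ is a function such that preimages of trunks in $\mathcal{D}$ are trunks in $\mathcal{C}$; an isomorphism is a morphism with an inverse function that is a morphism. A neuron $i$ is trivial if $\mathrm{Tk}_{\mathcal{C}}(i)=\emptyset$; a nontrivial neuron $i$ is redundant if $\mathrm{Tk}_{\mathcal{C}}(i)=\mathrm{Tk}_{\mathcal{C}}(\sigma)$ for some $\sigma$ with $i\notin\sigma$. A code $\mathcal{C}\subseteq 2^{[n]}$ is reduced if no $i\in[n]$ is trivial or redundant. For a permutation $w$ and $c\subseteq[n]$, $w(c)=\{w(i)\mid i\in c\}$. *)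

(* Defs.v *)
From mathcomp Require Import all_boot all_fingroup.
Set Implicit Arguments. Unset Strict Implicit. Unset Printing Implicit Defensive.

(* A code on [n] is a set of subsets of 'I_n (neurons are 0..n-1). *)
Definition code (n : nat) := {set {set 'I_n}}.

Definition Tk (n : nat) (C : code n) (sigma : {set 'I_n}) : {set {set 'I_n}} :=
  [set c in C | sigma \subset c].

Definition is_trunk (n : nat) (C : code n) (T : {set {set 'I_n}}) : Prop :=
  T = set0 \/ exists sigma : {set 'I_n}, T = Tk C sigma.

(* A function C -> D, represented by f on all subsets, mapping C into D;
   only its values on C matter. *)
Definition maps_into (n m : nat) (C : code n) (D : code m)
  (f : {set 'I_n} -> {set 'I_m}) : Prop :=
  forall c, c \in C -> f c \in D.

Definition preim_code (n m : nat) (C : code n)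
  (f : {set 'I_n} -> {set 'I_m}) (T : {set {set 'I_m}}) : {set {set 'I_n}} :=
  [set c in C | f c \in T].

Definition is_morphism (n m : nat) (C : code n) (D : code m)
  (f : {set 'I_n} -> {set 'I_m}) : Prop :=
  maps_into C D f /\
  forall T : {set {set 'I_m}}, T \subset D -> is_trunk D T ->
    is_trunk C (preim_code C f T).

Definition is_isomorphism (n m : nat) (C : code n) (D : code m)
  (f : {set 'I_n} -> {set 'I_m}) : Prop :=
  is_morphism C D f /\
  exists g : {set 'I_m} -> {set 'I_n},
    is_morphism D C g /\
    (forall c, c \in C -> g (f c) = c) /\
    (forall d, d \in D -> f (g d) = d).

Definition trivial_neuron (n : nat) (C : code n) (i : 'I_n) : Prop :=
  Tk C [set i] = set0.

Definition redundant_neuron (n : nat) (C : code n) (i : 'I_n) : Prop :=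
  Tk C [set i] != set0 /\
  exists sigma : {set 'I_n}, i \notin sigma /\ Tk C [set i] = Tk C sigma.

Definition reduced (n : nat) (C : code n) : Prop :=
  forall i : 'I_n, ~ trivial_neuron C i /\ ~ redundant_neuron C i.

(* Main.v *)
Require Import Defs.
From mathcomp Require Import all_boot all_fingroup.
Set Implicit Arguments. Unset Strict Implicit. Unset Printing Implicit Defensive.

Lemma TkP n (C : code n) s c : (c \in Tk C s) = (c \in C) && (s \subset c).
Proof. by rewrite inE. Qed.

Lemma Tk1P n (C : code n) i c : (c \in Tk C [set i]) = (c \in C) && (i \in c).
Proof. by rewrite TkP sub1set. Qed.

Lemma neuron_inj n (C : code n) i i' :
  reduced C -> Tk C [set i] = Tk C [set i'] -> i = i'.
Proof.
move=> rC E; apply/eqP; apply/negPn/negP => ne.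
have [nt nr] := rC i; apply: nr; split.
  by apply/eqP.
by exists [set i']; split => //; rewrite in_set1.
Qed.

Lemma key n m (C : code n) (D : code m) f g :
  reduced C -> is_morphism C D f -> is_morphism D C g ->
  (forall c, c \in C -> g (f c) = c) ->
  forall i : 'I_n, exists j : 'I_m, forall c, c \in C -> (i \in c) = (j \in f c).
Proof.
move=> rC [fD fm] [gC gm] gf i.
have [nt nr] := rC i.
set S := Tk C [set i].
have SC : S \subset C by apply/subsetP => c; rewrite TkP => /andP[].
have [c0 c0S] : exists c0, c0 \in S.
  by case: (set_0Vmem S) => [E|[c0 H]]; [exfalso; apply: nt|exists c0].
set P := preim_code D g S.
have PD : P \subset D by apply/subsetP => d; rewrite inE => /andP[].
have [P0|[tau Ptau]] := gm S SC (or_intror (ex_intro _ [set i] erefl)).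
  exfalso.
  have c0C : c0 \in C by move: c0S; rewrite TkP => /andP[].
  have : f c0 \in P by rewrite inE fD // gf.
  by rewrite /P P0 inE.
have SP c : c \in C -> (c \in S) = (f c \in Tk D tau).
  move=> cC; rewrite -Ptau.
  have -> : (f c \in preim_code D g S) = (f c \in D) && (g (f c) \in S) by rewrite inE.
  by rewrite fD // gf.
set Q := fun j : 'I_m => preim_code C f (Tk D [set j]).
have QS j : j \in tau -> S \subset Q j.
  move=> jt; apply/subsetP => c cS.
  have cC : c \in C by move: cS; rewrite TkP => /andP[].
  move: cS; rewrite SP // TkP => /andP[_ H].
  rewrite inE cC Tk1P fD //=.
  by apply: (subsetP H).
have Qex : forall j : 'I_m, exists s : {set 'I_n}, j \in tau -> Q j = Tk C s.
  move=> j; case jt: (j \in tau); last by exists set0.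
  have QD : Tk D [set j] \subset D by apply/subsetP => d; rewrite TkP => /andP[].
  have [Q0|[s Qs]] := fm _ QD (or_intror (ex_intro _ [set j] erefl)).
    exfalso; have := subsetP (QS j jt) c0 c0S.
    by rewrite /Q Q0 inE.
  by exists s.
have [sig Hsig] := fin_all_exists Qex.
have /existsP [j /andP [jt isig]] : [exists j, (j \in tau) && (i \in sig j)].
  case E: [exists j, (j \in tau) && (i \in sig j)] => //.
  move/negbT: E; rewrite negb_exists => /forallP H.
  exfalso; apply: nr; split; first by apply/eqP => E0; move: c0S; rewrite /S E0 inE.
  exists (\bigcup_(j in tau) sig j); split.
    apply/bigcupP => -[j jt ij]; have := H j; by rewrite jt ij.
  apply/setP => c; rewrite -/S TkP.
  case cC: (c \in C); last by rewrite TkP cC.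
  rewrite SP // TkP fD //=.
  apply/subsetP/bigcupsP.
    move=> Ht j jt; have := Hsig j jt; move/setP/(_ c).
    by rewrite inE cC Tk1P fD //= (Ht j jt) TkP cC /= => /esym.
  move=> Hs j jt; have := Hsig j jt; move/setP/(_ c).
  by rewrite inE cC Tk1P fD //= TkP cC Hs.
exists j => c cC.
have E : Q j = S.
  apply/eqP; rewrite eqEsubset QS // andbT Hsig //.
  apply/subsetP => c'; rewrite !TkP => /andP[-> H] /=.
  by rewrite sub1set (subsetP H).
move/setP: E => /(_ c); rewrite inE cC Tk1P fD //= Tk1P cC /=.
by move=> ->.
Qed.

Lemma Tk_eq n (C : code n) i i' :
  (forall c, c \in C -> (i \in c) = (i' \in c)) -> Tk C [set i] = Tk C [set i'].
Proof.
move=> H; apply/setP => c; rewrite !Tk1P.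
by case cC: (c \in C) => //=; rewrite H.
Qed.

Theorem corollary3p3 (n m : nat) (C : code n) (D : code m)
  (f : {set 'I_n} -> {set 'I_m}) :
  reduced C -> reduced D -> is_isomorphism C D f ->
  exists e : n = m, exists w : {perm 'I_n},
    forall c, c \in C -> f c = [set cast_ord e (w i) | i in c].
Proof.
move=> rC rD [fm [g [gm [gf fg]]]].
have [w Hw] := fin_all_exists (key rC fm gm gf).
have [v Hv] := fin_all_exists (key rD gm fm fg).
have fD := fm.1; have gC := gm.1.
have vw i : v (w i) = i.
  apply: (neuron_inj rC); apply: Tk_eq => c cC.
  have := Hv (w i) (f c) (fD c cC); rewrite gf // => <-.
  by rewrite (Hw i c cC).
have wv j : w (v j) = j.
  apply: (neuron_inj rD); apply: Tk_eq => d dD.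
  have := Hw (v j) (g d) (gC d dD); rewrite fg // => <-; by rewrite (Hv j d dD).
have winj : injective w := can_inj vw.
have vinj : injective v := can_inj wv.
have Hnm : n = m.
  apply/eqP; rewrite eqn_leq.
  have := leq_card w winj; have := leq_card v vinj; rewrite !card_ord => -> ->.
  done.
subst m; exists erefl.
exists (perm winj) => c cC.
apply/setP => j; rewrite -[j]wv -(Hw (v j) c cC).
apply/idP/imsetP => [vc|[i ic]]; first by exists (v j); rewrite // cast_ord_id permE.
by rewrite cast_ord_id permE => /winj ->.
Qed.
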